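(* Let $n\in\mathbf{N}$ and $A\subset[n]$ have property P. Then for each $i\in\{1,3\}$, $$\left|A\cap\left(\tfrac n4,\tfrac n3\right]\cap(1+2\mathbf{Z})\right|+\left|A\cap\left(\tfrac{2n}{3},n\right]\cap(i+4\mathbf{Z})\right|\leqslant\frac{n}{12}+3.$$
   Context: A set $A\subset\mathbf{N}$ has property P if there are no $x,y,z\in A$ (not necessarily distinct $x,y$) with $z<x$, $z<y$ and $z\mid x+y$. Intervals denote sets of integers. *)

(* Defs.v *)
From mathcomp Require Import all_boot.

Definition propP (A : pred nat) : Prop :=
  forall x y z, A x -> A y -> A z -> z < x -> z < y -> ~~ (z %| x + y).

Definition subset_n (A : pred nat) (n : nat) : Prop :=
  forall x, A x -> 1 <= x <= n.

(* Main.v *)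
Require Import Defs.
From mathcomp Require Import all_boot.
From mathcomp Require Import zify.

Section S.
Variables (n i : nat) (A : pred nat).
Definition Cp x := [&& A x, 2 * n < 3 * x, x <= n & x %% 4 == i].
Definition fB b := if 3 * b %% 4 == i then 3 * b
  else if Cp (3 * b - 2) then 3 * b + 2 else 3 * b - 2.
Definition mm := ((n + 2) %/ 4 - n %/ 6).
Definition idx v : 'I_(mm.+1) := inord (v %/ 4 - n %/ 6).

Lemma idx_inj v w : v %% 4 = w %% 4 -> n %/ 6 <= v %/ 4 <= (n+2) %/ 4 ->
  n %/ 6 <= w %/ 4 <= (n+2) %/ 4 -> idx v = idx w -> v = w.
Proof.
move=> Hm Hv Hw /(congr1 (@nat_of_ord _)); rewrite /idx /mm !inordK; lia.
Qed.

Hypothesis hP : propP A.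
Hypothesis hi : (i == 1) || (i == 3).

Lemma fB_prop b : A b -> odd b -> n < 4 * b -> 3 * b <= n ->
  [/\ fB b %% 4 = i, n %/ 6 <= fB b %/ 4 <= (n+2) %/ 4,
      3 * b - 2 <= fB b <= 3 * b + 2 & ~~ Cp (fB b)].
Proof.
move=> Ab ob h1 h2.
have o2 : b %% 2 = 1 by rewrite modn2 ob.
rewrite /fB; case: ifP => [/eqP e|/negbT e].
  split; try lia.
  apply/negP => /and4P [A3 _ _ _].
  have H := hP _ _ _ A3 A3 Ab.
  have : ~~ (b %| 3 * b + 3 * b) by apply: H; lia.
  by rewrite -mulnDl dvdn_mull.
case: ifP => [C2|/negbT C2].
  split; try lia.
  apply/negP => /and4P [A3 _ _ _].
  move: C2 => /and4P [A2 l2 _ _].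
  have H := hP _ _ _ A2 A3 Ab.
  have : ~~ (b %| (3 * b - 2) + (3 * b + 2)) by apply: H; lia.
  have -> : (3 * b - 2) + (3 * b + 2) = 6 * b by lia.
  by rewrite dvdn_mull.
split => //; lia.
Qed.
End S.

Theorem mainTheorem13 (n : nat) (A : pred nat) :
  subset_n A n -> propP A ->
  forall i : nat, (i == 1) || (i == 3) ->
  12 * (#|[set x : 'I_(n.+1) | [&& A x, n < 4 * x, 3 * x <= n & odd x]]|
        + #|[set x : 'I_(n.+1) | [&& A x, 2 * n < 3 * x, x <= n & x %% 4 == i]]|)
  <= n + 36.
Proof.
move=> _ hP i hi.
set XB := [set x : 'I_(n.+1) | _].
set XC := [set x : 'I_(n.+1) | _].
pose gB := fun x : 'I_(n.+1) => idx n (fB n i A x).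
pose gC := fun x : 'I_(n.+1) => idx n x.
have iB : {in XB &, injective gB}.
  move=> x y; rewrite !inE => /and4P [Ax l1 l2 ox] /and4P [Ay m1 m2 oy] E.
  have [a1 a2 a3 _] := @fB_prop n i A hP hi _ Ax ox l1 l2.
  have [b1 b2 b3 _] := @fB_prop n i A hP hi _ Ay oy m1 m2.
  have E2 := @idx_inj n _ _ (etrans a1 (esym b1)) a2 b2 E.
  have ox2 : x %% 2 = 1 by rewrite modn2 ox.
  have oy2 : y %% 2 = 1 by rewrite modn2 oy.
  apply: val_inj => /=; lia.
have iC : {in XC &, injective gC}.
  move=> x y; rewrite !inE => /and4P [Ax l1 l2 /eqP ox] /and4P [Ay m1 m2 /eqP oy] E.
  apply: val_inj; apply: (@idx_inj n) E; [by rewrite ox oy | lia | lia].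
have dj : gB @: XB :&: gC @: XC = set0.
  apply/setP => w; rewrite inE in_set0; apply/negP => /andP [H1 H2].
  case/imsetP: H1 => u xB Ew; case/imsetP: H2 => v yC; rewrite Ew => E.
  move: xB yC; rewrite !inE => /and4P [Ax l1 l2 ox] /and4P [Ay m1 m2 /eqP oy].
  have [a1 a2 a3 a4] := @fB_prop n i A hP hi _ Ax ox l1 l2.
  have E2 : fB n i A u = v.
    apply: (@idx_inj n) E; try lia.
  move: a4; rewrite E2 /Cp Ay m1 m2 oy eqxx //.
have := cardsUI (gB @: XB) (gC @: XC).
rewrite (card_in_imset iB) (card_in_imset iC).
rewrite dj; rewrite cards0 addn0 => <-.
have := max_card (gB @: XB :|: gC @: XC); rewrite card_ord /mm.
lia.
Qed.
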